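(* Let $(F_S,\iota)$ be an embedded local étale algebra and let $\Gamma\subseteq\mathrm{PGL}_2(F_S)$ be a subgroup whose set of limit points $\mathcal L^S_\Gamma\subseteq\mathbb P^1(\mathbf C_S)$ is empty. Then $\Gamma$ is finite.
   Context: Fix a prime $p$ and let $\mathbf{C}$ be the completion of an algebraic closure of $\mathbb{Q}_p$ or of $\mathbb{F}_p((T))$. An embedded local étale algebra $(F_S,\iota)$ consists of a finite non-empty set $S$, non-Archimedean local fields $F_\mathfrak p$ ($\mathfrak p\in S$) of residue characteristic $p$ and of the same characteristic as $\mathbf C$, and field embeddings $\iota_\mathfrak p\colon F_\mathfrak p\hookrightarrow\mathbf C$; $F_S=\prod_\mathfrak pF_\mathfrak p$. The group $\mathrm{PGL}_2(F_S)=\prod_\mathfrak p\mathrm{PGL}_2(F_\mathfrak p)$ acts componentwise via $\iota$ by Möbius transformations on $\mathbb P^1(\mathbf C_S):=\prod_{\mathfrak p\in S}\mathbb P^1(\mathbf C)$ (product topology). For a subgroup $\Gamma\subseteq\mathrm{PGL}_2(F_S)$, $\mathcal L^S_\Gamma$ is the set of $x\in\mathbb P^1(\mathbf C_S)$ such that there exist $y\in\mathbb P^1(\mathbf C_S)$ and pairwise distinct elements $\gamma_j\in\Gamma$ ($j\ge1$) with $\gamma_j(y)\to x$. *)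

(* Defs.v *)
From HB Require Import structures.
From mathcomp Require Import all_boot all_order all_algebra.
From mathcomp Require Import reals.
Set Implicit Arguments.
Unset Strict Implicit.
Unset Printing Implicit Defensive.
Import Order.TTheory GRing.Theory Num.Theory.
Local Open Scope ring_scope.

Section ValuedField.
Variables (R : realType) (C : fieldType) (abs : C -> R).

Definition nonarch_abs : Prop :=
  [/\ (forall x, 0 <= abs x),
      (forall x, abs x = 0 <-> x = 0),
      (forall x y, abs (x * y) = abs x * abs y) &
      (forall x y, abs (x + y) <= Num.max (abs x) (abs y))].

Definition abs_cvg (u : nat -> C) (l : C) : Prop :=
  forall e : R, 0 < e -> exists N, forall n, (N <= n)%N -> abs (u n - l) < e.

Definition abs_cauchy (u : nat -> C) : Prop :=
  forall e : R, 0 < e -> exists N, forall m n, (N <= m)%N -> (N <= n)%N ->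
    abs (u m - u n) < e.

Definition abs_complete : Prop :=
  forall u, abs_cauchy u -> exists l, abs_cvg u l.

Definition is_subfield (K : C -> Prop) : Prop :=
  [/\ K 0, K 1,
      (forall x y, K x -> K y -> K (x - y)),
      (forall x y, K x -> K y -> K (x * y)) &
      (forall x, K x -> x != 0 -> K x^-1)].

Definition nondiscrete (K : C -> Prop) : Prop :=
  exists x, K x /\ 0 < abs x < 1.

Definition locally_compact (K : C -> Prop) : Prop :=
  exists r : R, 0 < r /\
    forall u : nat -> C, (forall n, K (u n) /\ abs (u n) <= r) ->
      exists (phi : nat -> nat) (l : C),
        [/\ (forall n, (phi n < phi n.+1)%N), K l & abs_cvg (u \o phi) l].

(* K is (the image under a continuous field embedding of) a
   non-Archimedean local field: a locally compact, non-discrete subfield *)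
Definition local_subfield (K : C -> Prop) : Prop :=
  [/\ is_subfield K, nondiscrete K & locally_compact K].

Definition algebraic_over (K : C -> Prop) (x : C) : Prop :=
  exists q : {poly C}, [/\ q != 0, (forall i, K q`_i) & root q x].

Definition abs_dense (D : C -> Prop) : Prop :=
  forall (x : C) (e : R), 0 < e -> exists y, D y /\ abs (x - y) < e.

(* (C, abs) is the completion of an algebraic closure of a non-Archimedean
   local field of residue characteristic p (equivalently of Q_p or F_p((T))) *)
Definition completed_alg_closure (p : nat) : Prop :=
  [/\ nonarch_abs, abs_complete, abs p%:R < 1 &
      exists K0, local_subfield K0 /\ abs_dense (algebraic_over K0)].

(* P^1(C) = C u {oo}, with oo = None, and the chordal metric *)
Definition chordal (z w : option C) : R :=
  match z, w with
  | Some x, Some y => abs (x - y) / (Num.max 1 (abs x) * Num.max 1 (abs y))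
  | Some x, None | None, Some x => (Num.max 1 (abs x))^-1
  | None, None => 0
  end.

Definition mobius (A : 'M[C]_2) (z : option C) : option C :=
  let a := A ord0 ord0 in let b := A ord0 ord_max in
  let c := A ord_max ord0 in let d := A ord_max ord_max in
  match z with
  | Some x => if c * x + d == 0 then None else Some ((a * x + b) / (c * x + d))
  | None => if c == 0 then None else Some (a / c)
  end.

Section PGL.
Variables (S : finType) (K : S -> C -> Prop).

(* elements of GL_2(F_S), viewed in GL_2(C)^S via iota *)
Definition inGL (g : S -> 'M[C]_2) : Prop :=
  forall s, (forall i j, K s (g s i j)) /\ \det (g s) != 0.

(* equality in PGL_2(F_S) = GL_2(F_S) / F_S^x *)
Definition proj_eq (g h : S -> 'M[C]_2) : Prop :=
  forall s, exists c, [/\ K s c, c != 0 & h s = c *: g s].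

Definition scalar_tuple (g : S -> 'M[C]_2) : Prop :=
  forall s, exists c, [/\ K s c, c != 0 & g s = c%:M].

(* G is the full preimage in GL_2(F_S) of a subgroup Gamma of PGL_2(F_S),
   i.e. a subgroup of GL_2(F_S) containing the centre F_S^x *)
Definition pgl_subgroup (G : (S -> 'M[C]_2) -> Prop) : Prop :=
  [/\ (forall g, G g -> inGL g),
      (forall g, scalar_tuple g -> G g),
      (forall g h, G g -> G h -> G (fun s => g s *m h s)) &
      (forall g, G g -> G (fun s => invmx (g s)))].

Definition limit_point (G : (S -> 'M[C]_2) -> Prop) (x : S -> option C) : Prop :=
  exists (y : S -> option C) (gam : nat -> S -> 'M[C]_2),
    [/\ (forall j, G (gam j)),
        (forall i j, i <> j -> ~ proj_eq (gam i) (gam j)) &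
        (forall s (e : R), 0 < e -> exists N, forall j, (N <= j)%N ->
            chordal (mobius (gam j s) (y s)) (x s) < e)].

Definition pgl_finite (G : (S -> 'M[C]_2) -> Prop) : Prop :=
  exists (n : nat) (f : nat -> S -> 'M[C]_2),
    forall g, G g -> exists i, (i < n)%N /\ proj_eq g (f i).

End PGL.
End ValuedField.

(* Main.v *)
Require Import Defs.
From HB Require Import structures.
From mathcomp Require Import all_boot all_order all_algebra.
From mathcomp Require Import reals ring lra.
From Stdlib Require Import Classical ClassicalEpsilon.
Import Order.TTheory GRing.Theory Num.Theory.
Set Implicit Arguments.
Unset Strict Implicit.
Local Open Scope ring_scope.

Lemma bern (R : realType) (t : R) n : 0 <= t -> 1 + t *+ n <= (1 + t) ^+ n.
Proof.
move=> t0; elim: n => [|n IH]; first by rewrite expr0 mulr0n addr0.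
rewrite exprS mulrS.
have h : 0 <= t *+ n by rewrite mulrn_wge0.
have h2 : 0 <= t * t *+ n by rewrite mulrn_wge0 // mulr_ge0.
have : (1 + t) * (1 + t *+ n) <= (1 + t) * (1 + t) ^+ n by rewrite ler_wpM2l // addr_ge0.
rewrite mulrDr mulr1 mulrDl mul1r mulrnAr. lra.
Qed.

Lemma inv_le_helper (R : realType) (b M : R) : 0 < b -> b^-1 <= M -> M^-1 <= b.
Proof.
move=> b0 h.
have M0 : 0 < M by apply: lt_le_trans h; rewrite invr_gt0.
rewrite -[M^-1]mul1r ler_pdivrMr //.
have := ler_wpM2l (ltW b0) h; by rewrite mulfV ?gt_eqF.
Qed.

Lemma exists_pow (R : realType) (q r : R) : 0 <= q -> q < 1 -> 0 < r -> exists k, q ^+ k <= r.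
Proof.
move=> q0 q1 r0.
have [->|qn0] := eqVneq q 0; first by exists 1%N; rewrite expr1 ltW.
have qp : 0 < q by rewrite lt_def qn0.
set s := q^-1. set t := s - 1.
have s1 : 1 < s by rewrite /s invf_gt1.
have t0 : 0 < t by rewrite /t subr_gt0.
have hb : 0 <= (r * t)^-1 by rewrite invr_ge0 ltW // mulr_gt0.
set k := Num.Def.archi_bound (r * t)^-1.
have hk := archi_boundP hb.
exists k.
have -> : q = s^-1 by rewrite /s invrK.
rewrite exprVn; apply: inv_le_helper => //.
have e1 : t * (r * t)^-1 = r^-1 by field; rewrite ?gt_eqF.
have h1 : r^-1 < t * k%:R by rewrite -e1 ltr_pM2l.
have h2 := bern k (ltW t0).
have -> : s = 1 + t by rewrite /t addrC subrK.
rewrite -mulr_natr in h2. lra.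
Qed.


Definition incr (phi : nat -> nat) := forall n, (phi n < phi n.+1)%N.

Lemma incr_lt phi i j : incr phi -> (i < j)%N -> (phi i < phi j)%N.
Proof.
move=> hp; elim: j => // j IH; rewrite ltnS leq_eqVlt => /orP [/eqP -> | /IH h].
  exact: hp.
exact: ltn_trans h (hp j).
Qed.

Lemma incr_ge phi n : incr phi -> (n <= phi n)%N.
Proof. by move=> hp; elim: n => // n IH; apply: leq_ltn_trans IH (hp n). Qed.

Lemma incr_comp phi psi : incr phi -> incr psi -> incr (phi \o psi).
Proof. by move=> h1 h2 n /=; apply: incr_lt. Qed.

Lemma extract (P : nat -> Prop) : (forall N, exists n, (N <= n)%N /\ P n) ->
  exists phi, incr phi /\ forall n, P (phi n).
Proof.
move=> h.
pose f N := proj1_sig (constructive_indefinite_description _ (h N)).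
have hf N : (N <= f N)%N /\ P (f N) := proj2_sig (constructive_indefinite_description _ (h N)).
pose phi := fix phi n := match n with 0 => f 0%N | n'.+1 => f (phi n').+1 end.
exists phi; split.
  by move=> n /=; case: (hf (phi n).+1).
by case=> [|n] /=; [case: (hf 0%N) | case: (hf (phi n).+1)].
Qed.

Section Abs.
Variables (R : realType) (C : fieldType) (abs : C -> R).
Hypothesis Habs : nonarch_abs abs.

Lemma abs_ge0 x : 0 <= abs x. Proof. by case: Habs. Qed.
Lemma abs_eq0 x : (abs x = 0) <-> x = 0. Proof. by case: Habs. Qed.
Lemma abs0 : abs 0 = 0. Proof. exact/abs_eq0. Qed.
Lemma absM x y : abs (x * y) = abs x * abs y. Proof. by case: Habs. Qed.
Lemma abs_neq0 x : x != 0 -> abs x != 0.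
Proof. by move=> h; apply/eqP => /abs_eq0 /eqP; rewrite (negPf h). Qed.
Lemma abs_gt0 x : x != 0 -> 0 < abs x.
Proof. by move=> h; rewrite lt_def abs_neq0 // abs_ge0. Qed.
Lemma abs1 : abs 1 = 1.
Proof.
have h := absM 1 1; rewrite mulr1 in h.
have nz : abs 1 != 0 by apply: abs_neq0; rewrite oner_eq0.
by apply: (mulIf nz); rewrite mul1r -h.
Qed.
Lemma absV x : abs x^-1 = (abs x)^-1.
Proof.
have [->|nz] := eqVneq x 0; first by rewrite invr0 abs0 invr0.
have h : abs x * abs x^-1 = 1 by rewrite -absM mulfV // abs1.
by rewrite -[abs x^-1]mul1r -(mulVf (abs_neq0 nz)) -mulrA h mulr1.
Qed.
Lemma absN x : abs (- x) = abs x.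
Proof.
have h : abs (-1) * abs (-1) = 1 by rewrite -absM mulrNN mulr1 abs1.
have h0 := abs_ge0 (-1).
have h1 : abs (-1) = 1 by nra.
by rewrite -mulN1r absM h1 mul1r.
Qed.
Lemma absB x y : abs (x - y) = abs (y - x).
Proof. by rewrite -opprB absN. Qed.
Lemma absX x k : abs (x ^+ k) = abs x ^+ k.
Proof. by elim: k => [|k IH]; rewrite ?expr0 ?abs1 // !exprS absM IH. Qed.

Lemma max1_ge1 (a : R) : 1 <= Num.max 1 a. Proof. by rewrite le_max lexx. Qed.
Lemma max1_ge (a : R) : a <= Num.max 1 a. Proof. by rewrite le_max lexx orbT. Qed.

Lemma chordal_le a b : chordal abs (Some a) (Some b) <= abs (a - b).
Proof.
rewrite /=.
have hM : 1 <= Num.max 1 (abs a) * Num.max 1 (abs b) by rewrite mulr_ege1 // max1_ge1.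
rewrite ler_pdivrMr; last by apply: lt_le_trans hM.
by rewrite ler_peMr // abs_ge0.
Qed.

Definition oinv (z : option C) : C := if z is Some x then x^-1 else 0.
Definition otgt (l : C) : option C := if l == 0 then None else Some l^-1.

Lemma chordal_inv_le z l : (forall x, z = Some x -> x != 0) ->
  chordal abs z (otgt l) <= abs (oinv z - l).
Proof.
rewrite /otgt; case: z => [x|] hz; have [l0|ln0] := eqVneq l 0; rewrite /=.
- have xn0 := hz x erefl.
  rewrite l0 subr0 absV; apply: inv_le_helper; first by rewrite invr_gt0 abs_gt0.
  by rewrite invrK max1_ge.
- have xn0 := hz x erefl.
  have e1 : x - l^-1 = (x * l - 1) * l^-1 by field.
  have e2 : x^-1 - l = - (x * l - 1) * x^-1 by field.
  rewrite e1 e2 !absM absN !absV.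
  set t := abs (x * l - 1); set a := abs x; set b := abs l.
  have a0 : 0 < a by rewrite abs_gt0.
  have b0 : 0 < b by rewrite abs_gt0.
  rewrite -mulrA. apply: ler_wpM2l; first exact: abs_ge0.
  rewrite -invfM; apply: inv_le_helper; first by rewrite invr_gt0.
  rewrite invrK.
  have h1 : 1 <= b * Num.max 1 b^-1.
    have := ler_wpM2l (ltW b0) (max1_ge b^-1); by rewrite mulfV ?gt_eqF.
  have h2 := max1_ge a.
  have h3 : 0 <= Num.max 1 a by apply: le_trans (max1_ge1 _).
  have := ler_wpM2l h3 h1; rewrite mulr1 => h4.
  apply: (le_trans h2); apply: (le_trans h4); by rewrite mulrCA.
- by rewrite l0 subr0 abs0.
- rewrite sub0r absN absV; apply: inv_le_helper; first by rewrite abs_gt0.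
  exact: max1_ge.
Qed.

Definition ccvg (u : nat -> option C) (x : option C) :=
  forall e : R, 0 < e -> exists N, forall j, (N <= j)%N -> chordal abs (u j) x < e.

Lemma ccvg_sub u x phi : incr phi -> ccvg u x -> ccvg (u \o phi) x.
Proof.
move=> hp h e e0; have [N hN] := h e e0; exists N => j hj.
by apply: hN; apply: leq_trans hj (incr_ge _ hp).
Qed.

Definition cpt (P : option C -> Prop) :=
  forall z, (forall n, P (z n)) -> exists phi x, incr phi /\ ccvg (z \o phi) x.

Definition P1 (K : C -> Prop) (z : option C) := z = None \/ exists x, K x /\ z = Some x.

Section Loc.
Variable K : C -> Prop.
Hypothesis HK : local_subfield abs K.

Lemma Ksub : is_subfield K. Proof. by case: HK. Qed.

Lemma KX x k : K x -> K (x ^+ k).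
Proof.
case: Ksub => _ K1 _ KM _ kx.
by elim: k => [|k IH]; rewrite ?expr0 // exprS; apply: KM.
Qed.

Lemma lemA u : (forall n, K (u n) /\ abs (u n) <= 1) ->
  exists phi l, incr phi /\ abs_cvg abs (u \o phi) l.
Proof.
move=> hu.
case: HK => [[_ _ _ KM _] [pi [Kpi /andP [pi0 pi1]]] [r [r0 Hr]]].
have [k hk] := exists_pow (ltW pi0) pi1 r0.
have pin0 : pi != 0 by apply/eqP => e; move: pi0; rewrite e abs0 // ltxx.
have pkn0 : pi ^+ k != 0 by rewrite expf_neq0.
pose v n := pi ^+ k * u n.
have hv n : K (v n) /\ abs (v n) <= r.
  case: (hu n) => K1 a1; split; first by apply: KM => //; apply: KX.
  rewrite /v absM // absX //; apply: le_trans hk.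
  by rewrite -[X in _ <= X]mulr1 ler_wpM2l // exprn_ge0 // abs_ge0.
have [phi [l [hphi _ hl]]] := Hr v hv.
exists phi, (l * (pi ^+ k)^-1); split => // e e0.
have pk0 : 0 < abs pi ^+ k by rewrite exprn_gt0.
have [N hN] := hl (e * abs pi ^+ k) (mulr_gt0 e0 pk0).
exists N => n hn; have := hN n hn; rewrite /= /v.
have -> : u (phi n) - l * (pi ^+ k)^-1 = (pi ^+ k * u (phi n) - l) * (pi ^+ k)^-1 by field.
by rewrite absM // absV // absX // ltr_pdivrMr.
Qed.

Lemma P1cpt : cpt (P1 K).
Proof.
move=> z hz.
case: Ksub => K0 K1 _ KM KV.
pose QA n := exists x, z n = Some x /\ abs x <= 1.
have [hA|hB] := classic (forall N, exists n, (N <= n)%N /\ QA n).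
- have [phi1 [hp1 hq]] := extract hA.
  pose u n := odflt 0 (z (phi1 n)).
  have hzu n : z (phi1 n) = Some (u n) /\ abs (u n) <= 1.
    by case: (hq n) => x [e ax]; rewrite /u e.
  have hu n : K (u n) /\ abs (u n) <= 1.
    case: (hzu n) => e a; split => //.
    case: (hz (phi1 n)); rewrite e // => -[x [kx [ex]]]; by rewrite ex.
  have [phi2 [l [hp2 hl]]] := lemA hu.
  exists (phi1 \o phi2), (Some l); split; first exact: incr_comp.
  move=> e e0; have [N hN] := hl e e0; exists N => j hj /=.
  case: (hzu (phi2 j)) => -> _.
  by apply: le_lt_trans (chordal_le _ _) _; apply: hN.
- have [N0 hN0] : exists N0, forall n, (N0 <= n)%N -> ~ QA n.
    apply: NNPP => h; apply: hB => N; apply: NNPP => h2; apply: h; exists N => n hn hq.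
    by apply: h2; exists n.
  pose phi1 n := (n + N0)%N.
  have hp1 : incr phi1 by move=> n; rewrite /phi1 addSn ltnS.
  pose w n := oinv (z (phi1 n)).
  have hnz n x : z (phi1 n) = Some x -> 1 < abs x.
    move=> e; rewrite ltNge; apply/negP => a.
    by apply: (hN0 (phi1 n)); [rewrite /phi1 leq_addl | exists x].
  have hw n : K (w n) /\ abs (w n) <= 1.
    rewrite /w; case: (hz (phi1 n)) => [->|[x [kx ex]]]; first by rewrite /= abs0 // ler01.
    have a1 := hnz n x ex.
    have xn0 : x != 0 by apply/eqP => e; move: a1; rewrite e abs0 // ltr10.
    rewrite ex /=; split; first exact: KV.
    by rewrite absV // invf_le1 ?ltW // (lt_trans ltr01).
  have [phi2 [l [hp2 hl]]] := lemA hw.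
  exists (phi1 \o phi2), (otgt l); split; first exact: incr_comp.
  move=> e e0; have [N hN] := hl e e0; exists N => j hj /=.
  apply: le_lt_trans (chordal_inv_le _ _) _.
    move=> x ex; have a1 := hnz _ x ex.
    by apply/eqP => e1; move: a1; rewrite e1 abs0 // ltr10.
  exact: hN.
Qed.
End Loc.

Lemma multi (S : finType) (P : S -> option C -> Prop) (hP : forall s, cpt (P s))
  (l : seq S) (z : nat -> S -> option C) : (forall n s, P s (z n s)) ->
  exists phi (x : S -> option C), incr phi /\
    forall s, s \in l -> ccvg (fun n => z (phi n) s) (x s).
Proof.
move=> hz; elim: l => [|s l [phi1 [x1 [hp1 h1]]]].
  by exists id, (fun _ => None); split => // n; exact: ltnSn.
have [phi2 [xs [hp2 h2]]] := hP s (fun n => z (phi1 n) s) (fun n => hz _ _).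
exists (phi1 \o phi2), (fun t => if t == s then xs else x1 t); split.
  exact: incr_comp.
move=> t; rewrite in_cons => /orP [/eqP -> | tl]; first by rewrite eqxx; exact: h2.
case: eqP => [->|_]; first exact: h2.
exact: (ccvg_sub hp2 (h1 t tl)).
Qed.
End Abs.

Unset Implicit Arguments.

Lemma proj_eq_sym (C : fieldType) (S : finType) (K : S -> C -> Prop)
  (g h : S -> 'M[C]_2) : (forall s, is_subfield (K s)) ->
  proj_eq K g h -> proj_eq K h g.
Proof.
move=> hK pe s; have [c [kc cn e]] := pe s.
case: (hK s) => _ _ _ _ KV.
exists c^-1; split; [exact: KV | by rewrite invr_neq0 | by rewrite e scalerA mulVf // scale1r].
Qed.

Theorem proposition2p3 (p : nat) (R : realType) (C : closedFieldType)
  (abs : C -> R) (S : finType) (K : S -> C -> Prop)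
  (G : (S -> 'M[C]_2) -> Prop) :
  prime p ->
  completed_alg_closure abs p ->
  (0 < #|S|)%N ->
  (forall s, local_subfield abs (K s)) ->
  pgl_subgroup K G ->
  (forall x : S -> option C, ~ limit_point abs K G x) ->
  pgl_finite K G.
Proof.
move=> _ [Habs _ _ _] _ HK [HGL _ _ _] Hnl.
have Ksub s : is_subfield (K s) by case: (HK s).
apply: NNPP => Hfin.
have next (n : nat) (f : nat -> S -> 'M[C]_2) :
    exists g, G g /\ forall i, (i < n)%N -> ~ proj_eq K g (f i).
  apply: NNPP => H; apply: Hfin; exists n, f => g Gg.
  apply: NNPP => H2; apply: H; exists g; split => // i lt pe.
  by apply: H2; exists i.
pose nx n f := proj1_sig (constructive_indefinite_description _ (next n f)).
have hnx n f : G (nx n f) /\ forall i, (i < n)%N -> ~ proj_eq K (nx n f) (f i).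
  exact: (proj2_sig (constructive_indefinite_description _ (next n f))).
pose F := fix F (n : nat) : nat -> S -> 'M[C]_2 :=
  match n with 0 => fun _ _ => 0 | n'.+1 => fun i => if i == n' then nx n' (F n') else F n' i end.
pose gam j := F j.+1 j.
have gamE j : gam j = nx j (F j) by rewrite /gam /= eqxx.
have FE m i : (i < m)%N -> F m i = gam i.
  elim: m => // m IH; rewrite ltnS leq_eqVlt => /orP [/eqP ->|him] /=.
    by rewrite eqxx gamE.
  by rewrite (ltn_eqF him) IH.
have Ggam j : G (gam j) by rewrite gamE; case: (hnx j (F j)).
have Dgam i j : (i < j)%N -> ~ proj_eq K (gam j) (gam i).
  move=> ij; rewrite gamE -(FE j i ij); case: (hnx j (F j)) => _; exact.
pose z n s := mobius (gam n s) None.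
have hz n s : P1 (K s) (z n s).
  rewrite /z /mobius /P1; case: eqP => hc; [by left | right].
  have [hin _] := HGL _ (Ggam n) s.
  case: (Ksub s) => _ _ _ KM KV.
  eexists; split; last reflexivity.
  apply: KM; first exact: hin.
  by apply: KV; [exact: hin | exact/eqP].
have [phi [x [hp hx]]] := multi (fun s => P1cpt Habs (HK s)) (enum S) hz.
apply: (Hnl x); exists (fun _ => None), (fun j => gam (phi j)); split.
- by move=> j; exact: Ggam.
- move=> i j ij; case: (ltngtP i j) => [lt|lt|eq]; last by [].
    by move=> pe; apply: (Dgam _ _ (incr_lt hp lt)); apply: proj_eq_sym.
  exact: (Dgam _ _ (incr_lt hp lt)).
- move=> s; exact: (hx s (mem_enum _ s)).
Qed.
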